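(* Let $0<\epsilon\le1/4$ and $0<\delta<1$. Let $\rho,\tilde\rho\in\mathbb{R}^{n\times n}$ be density matrices with $\sum_i|\tilde\rho_{ii}-\rho_{ii}|\le\epsilon/8$. Let $m=137\,\epsilon^{-2}(n\ln2+\ln(1/\delta))$, draw $N\sim\mathrm{Pois}(m)$, measure $N$ independent copies of $\tilde\rho$ in the computational basis, let $N_i$ be the number of outcomes equal to $i$, and set $\hat\rho_{ii}=N_i/m$. Then with probability at least $1-\delta$, $\sum_i|\hat\rho_{ii}-\rho_{ii}|\le\epsilon/4$.
   Context: A density matrix is a psd matrix of trace one; measuring $\tilde\rho$ in the computational basis yields outcome $i$ with probability $\tilde\rho_{ii}$. *)

(* Defs.v *)
From HB Require Import structures.
From mathcomp Require Import all_boot all_order all_algebra.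
From mathcomp Require Import boolp classical_sets reals ereal topology normedtype sequences exp.
Set Implicit Arguments. Unset Strict Implicit. Unset Printing Implicit Defensive.
Import Order.TTheory GRing.Theory Num.Theory.
Local Open Scope ring_scope.

Section Defs.
Variable R : realType.

Definition psd (n : nat) (A : 'M[R]_n) : Prop :=
  A^T = A /\ forall x : 'cV[R]_n, 0 <= (x^T *m A *m x) 0 0.

Definition density_matrix (n : nat) (A : 'M[R]_n) : Prop :=
  psd A /\ \tr A = 1.

Definition pois_pmf (m : R) (N : nat) : R := expR (- m) * m ^+ N / (N`!)%:R.

Definition outcome_count (N n : nat) (s : {ffun 'I_N -> 'I_n}) (i : 'I_n) : nat :=
  #|[set k | s k == i]|.

(* probability of an outcome sequence s of N independent computational-basis
   measurements of rhot: each outcome i has probability rhot i i *)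
Definition seq_prob (n : nat) (rhot : 'M[R]_n) (N : nat) (s : {ffun 'I_N -> 'I_n}) : R :=
  \prod_(k < N) rhot (s k) (s k).

Definition good_estimate (n : nat) (rho : 'M[R]_n) (m eps : R) (N : nat)
  (s : {ffun 'I_N -> 'I_n}) : bool :=
  \sum_(i < n) `| (outcome_count s i)%:R / m - rho i i | <= eps / 4.

Definition success_prob (n : nat) (rho rhot : 'M[R]_n) (m eps : R) : \bar R :=
  (\sum_(0 <= N <oo)
     (pois_pmf m N * \sum_(s : {ffun 'I_N -> 'I_n} | good_estimate rho m eps s)
                       seq_prob rhot s)%:E)%E.

End Defs.

(* Main.v *)
Require Import Defs.
From HB Require Import structures.
From mathcomp Require Import all_boot all_order all_algebra.
From mathcomp Require Import boolp classical_sets reals ereal topology normedtype sequences exp.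
From mathcomp Require Import ring lra.
Import Order.TTheory GRing.Theory Num.Theory.
Import numFieldNormedType.Exports.
Local Open Scope ring_scope.

Lemma exp_base (R : realType) (y : R) : `|y| <= 1/1024 ->
  expR y <= 1 + y + (1001/1000) * y^+2.
Proof.
move=> hy.
have hy' : -(1/1024) <= y <= 1/1024 by rewrite -ler_norml.
case/andP: hy' => h1 h2.
have e1 := expR_ge1Dx (- y).
have hp : 0 < 1 - y by lra.
have -> : expR y = (expR (- y))^-1 by rewrite expRN invrK.
have hq : 0 < expR (-y) := expR_gt0 _.
rewrite -[_^-1]mul1r ler_pdivrMr //.
apply: (le_trans _ (ler_wpM2l _ e1)); last first.
  have : 0 <= y ^+ 2 by rewrite sqr_ge0.
  move=> hy2; nra.
rewrite expr2; nra.
Qed.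

Lemma exp_step (R : realType) (a r b : R) : 0 <= a -> 0 <= r ->
  (1 + 2 * a) / 4 + a * r / 2 + a ^+ 2 * r ^+ 2 / 4 <= b ->
  (forall y, `|y| <= r -> expR y <= 1 + y + a * y ^+ 2) ->
  forall x, `|x| <= 2 * r -> expR x <= 1 + x + b * x ^+ 2.
Proof.
move=> a0 r0 hb hy x hx.
set y := x / 2.
have hxy : x = y + y by rewrite /y; field.
have hyr : `|y| <= r.
  rewrite /y normrM (ger0_norm (x := 2^-1)) ?invr_ge0 //; lra.
have hy2 : y ^+ 2 <= r ^+ 2.
  have /andP[hl hu] : -r <= y <= r by rewrite -ler_norml.
  rewrite !expr2; nra.
have hy3 : a * y ^+ 3 <= a * r * y ^+ 2.
  rewrite -mulrA; apply: ler_wpM2l => //.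
  rewrite exprS; apply: ler_wpM2r; first exact: sqr_ge0.
  exact: le_trans (ler_norm _) hyr.
have hy4 : y ^+ 4 <= r ^+ 2 * y ^+ 2.
  have -> : y ^+ 4 = y ^+ 2 * y ^+ 2 by rewrite -exprD.
  apply: ler_wpM2r => //; exact: sqr_ge0.
have e := hy _ hyr.
have ep := expR_ge0 y.
rewrite hxy expRD.
apply: (le_trans (y := (1 + y + a * y ^+ 2) ^+ 2)).
  rewrite expr2; apply: ler_pM => //.
have hy20 : 0 <= y ^+ 2 := sqr_ge0 y.
have : 4 * b * y ^+ 2 >= ((1 + 2 * a) + 2 * a * r + a ^+ 2 * r ^+ 2) * y ^+ 2.
  rewrite -mulrA mulrC -(mulrC (y ^+ 2)); apply: ler_wpM2l => //; lra.
have ha2 : 0 <= a ^+ 2 := sqr_ge0 a.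
have h4' : a ^+ 2 * y ^+ 4 <= a ^+ 2 * (r ^+ 2 * y ^+ 2) := ler_wpM2l ha2 hy4.
move: h4' hy3; rewrite !exprS !expr0 !mulr1 => h4' hy3 hh.
nra.
Qed.

Lemma exp_quad (R : realType) (x : R) : `|x| <= 1/32 ->
  expR x <= 1 + x + (17/32) * x ^+ 2.
Proof.
have s1 := @exp_step R (1001/1000) (1/1024) (752/1000) ltac:(lra) ltac:(lra)
  ltac:(rewrite !expr2; lra) (@exp_base R).
have s2 := @exp_step R (752/1000) (1/512) (628/1000) ltac:(lra) ltac:(lra)
  ltac:(rewrite !expr2; lra) (fun y hy => s1 y ltac:(lra)).
have s3 := @exp_step R (628/1000) (1/256) (566/1000) ltac:(lra) ltac:(lra)
  ltac:(rewrite !expr2; lra) (fun y hy => s2 y ltac:(lra)).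
have s4 := @exp_step R (566/1000) (1/128) (536/1000) ltac:(lra) ltac:(lra)
  ltac:(rewrite !expr2; lra) (fun y hy => s3 y ltac:(lra)).
have s5 := @exp_step R (536/1000) (1/64) (17/32) ltac:(lra) ltac:(lra)
  ltac:(rewrite !expr2; lra) (fun y hy => s4 y ltac:(lra)).
move=> hx; apply: s5; lra.
Qed.


Lemma prod_count (R : realType) (N n : nat) (s : {ffun 'I_N -> 'I_n}) (w : 'I_n -> R) :
  \prod_(k < N) w (s k) = \prod_(i < n) w i ^+ outcome_count s i.
Proof.
rewrite (partition_big s predT) //=.
apply: eq_bigr => i _.
rewrite /outcome_count.
rewrite (eq_bigr (fun _ => w i)); last by move=> k /eqP ->.
by rewrite prodr_const; congr (_ ^+ _); apply: eq_card => k; rewrite inE.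
Qed.

Lemma multinom (R : realType) (N n : nat) (f : 'I_n -> R) :
  \sum_(s : {ffun 'I_N -> 'I_n}) \prod_(k < N) f (s k) = (\sum_(i < n) f i) ^+ N.
Proof.
rewrite -(bigA_distr_bigA (fun (k : 'I_N) (i : 'I_n) => f i)).
by rewrite prodr_const card_ord.
Qed.

Lemma pm_expand (R : realType) (n : nat) (g : 'I_n -> bool -> R) :
  \prod_(i < n) (g i true + g i false) =
  \sum_(sg : {ffun 'I_n -> bool}) \prod_(i < n) g i (sg i).
Proof.
rewrite -(bigA_distr_bigA g); apply: eq_bigr => i _.
by rewrite big_bool.
Qed.


Definition mu {R : realType} {n : nat} (lam : R) (sg : {ffun 'I_n -> bool}) (i : 'I_n) : R :=
  if sg i then lam else - lam.

Lemma bad_indicator (R : realType) (n N : nat) (rho rhot : 'M[R]_n) (m eps lam : R)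
  (s : {ffun 'I_N -> 'I_n}) :
  0 < m -> 0 <= lam ->
  \sum_(i < n) `| rhot i i - rho i i | <= eps / 8 ->
  ~~ good_estimate rho m eps s ->
  1 <= expR (- (lam * m * (eps / 8))) *
       \prod_(i < n) (expR (lam * ((outcome_count s i)%:R - m * rhot i i)) +
                      expR (- lam * ((outcome_count s i)%:R - m * rhot i i))).
Proof.
move=> m0 l0 hclose; rewrite /good_estimate -ltNge => hbad.
set d := fun i : 'I_n => (outcome_count s i)%:R - m * rhot i i.
have hd : m * (eps / 8) <= \sum_(i < n) `|d i|.
  have e1 : \sum_(i < n) `|(outcome_count s i)%:R / m - rho i i| <=
      \sum_(i < n) `|(outcome_count s i)%:R / m - rhot i i| + \sum_(i < n) `| rhot i i - rho i i |.
    rewrite -big_split /=; apply: ler_sum => i _.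
    have -> : (outcome_count s i)%:R / m - rho i i =
      ((outcome_count s i)%:R / m - rhot i i) + (rhot i i - rho i i) by ring.
    exact: ler_normD.
  have e2 : \sum_(i < n) `|(outcome_count s i)%:R / m - rhot i i| = m^-1 * \sum_(i < n) `|d i|.
    rewrite mulr_sumr; apply: eq_bigr => i _.
    have -> : (outcome_count s i)%:R / m - rhot i i = m^-1 * d i.
      by rewrite /d; field; rewrite gt_eqF.
    by rewrite normrM ger0_norm // invr_ge0 ltW.
  have : eps / 8 < m^-1 * \sum_(i < n) `|d i| by lra.
  rewrite ltr_pdivlMl // => h; exact: ltW.
have hp : \prod_(i < n) expR (lam * `|d i|) <=
    \prod_(i < n) (expR (lam * d i) + expR (- lam * d i)).
  apply: ler_prod => i _; rewrite expR_ge0 /=.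
  case: (lerP 0 (d i)) => h.
    rewrite ger0_norm //; apply: ler_wpDr => //; exact: expR_ge0.
  rewrite ltr0_norm // mulrN -mulNr; apply: ler_wpDl => //; exact: expR_ge0.
apply: (le_trans _ (ler_wpM2l (expR_ge0 _) hp)).
rewrite -expR_sum -expRD -mulr_sumr.
rewrite -[leLHS]expR0 ler_expR.
have : lam * (m * (eps / 8)) <= lam * \sum_(i < n) `|d i| by apply: ler_wpM2l.
rewrite mulrA; lra.
Qed.

Lemma bad_sum (R : realType) (n N : nat) (rho rhot : 'M[R]_n) (m eps lam : R) :
  (forall i, 0 <= rhot i i) -> 0 < m -> 0 <= lam ->
  \sum_(i < n) `| rhot i i - rho i i | <= eps / 8 ->
  \sum_(s : {ffun 'I_N -> 'I_n} | ~~ good_estimate rho m eps s) seq_prob rhot s <=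
  \sum_(sg : {ffun 'I_n -> bool})
     (expR (- (lam * m * (eps / 8))) *
      \prod_(i < n) expR (- (mu lam sg i * (m * rhot i i)))) *
     (\sum_(i < n) rhot i i * expR (mu lam sg i)) ^+ N.
Proof.
move=> p0 m0 l0 hclose.
set E := expR (- (lam * m * (eps / 8))).
set F := fun s : {ffun 'I_N -> 'I_n} => E *
       \prod_(i < n) (expR (lam * ((outcome_count s i)%:R - m * rhot i i)) +
                      expR (- lam * ((outcome_count s i)%:R - m * rhot i i))).
have P0 : forall s : {ffun 'I_N -> 'I_n}, 0 <= seq_prob rhot s.
  by move=> s; apply: prodr_ge0 => k _.
have F0 : forall s, 0 <= F s.
  move=> s; apply: mulr_ge0; first exact: expR_ge0.
  by apply: prodr_ge0 => i _; apply: addr_ge0; exact: expR_ge0.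
apply: (le_trans (y := \sum_(s : {ffun 'I_N -> 'I_n} | ~~ good_estimate rho m eps s)
                         seq_prob rhot s * F s)).
  apply: ler_sum => s hs; apply: ler_peMr => //.
  exact: (bad_indicator _ _ _ _ _ _ _ _ _ m0 l0 hclose hs).
apply: (le_trans (y := \sum_(s : {ffun 'I_N -> 'I_n}) seq_prob rhot s * F s)).
  rewrite [leRHS](bigID (fun s => good_estimate rho m eps s)) /=.
  apply: ler_wpDl => //; apply: sumr_ge0 => s _; exact: mulr_ge0.
rewrite le_eqVlt; apply/orP; left; apply/eqP.
have key : forall s : {ffun 'I_N -> 'I_n}, seq_prob rhot s * F s =
   \sum_(sg : {ffun 'I_n -> bool})
     (E * \prod_(i < n) expR (- (mu lam sg i * (m * rhot i i)))) *
     \prod_(k < N) (rhot (s k) (s k) * expR (mu lam sg (s k))).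
  move=> s; rewrite /F.
  rewrite (@pm_expand _ _ (fun i b => expR ((if b then lam else - lam) *
                      ((outcome_count s i)%:R - m * rhot i i)))).
  rewrite mulr_sumr mulr_sumr; apply: eq_bigr => sg _.
  rewrite big_split /= (@prod_count _ _ _ s (fun i => expR (mu lam sg i))).
  have -> : \prod_(i < n) expR ((if sg i then lam else - lam) *
                      ((outcome_count s i)%:R - m * rhot i i)) =
     \prod_(i < n) expR (- (mu lam sg i * (m * rhot i i))) *
     \prod_(i < n) expR (mu lam sg i) ^+ outcome_count s i.
    rewrite -big_split /=; apply: eq_bigr => i _.
    rewrite -expRM_natl -expRD /mu; congr expR; ring.
  rewrite /seq_prob; ring.
rewrite (eq_bigr _ (fun s _ => key s)) exchange_big /=.
apply: eq_bigr => sg _.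
by rewrite -mulr_sumr (@multinom _ N _ (fun i => rhot i i * expR (mu lam sg i))).
Qed.


Lemma exp_partial (R : realType) (x : R) (K : nat) : 0 <= x ->
  \sum_(N < K) x ^+ N / (N`!)%:R <= expR x.
Proof.
move=> x0; rewrite /expR.
apply: limr_ge; first exact: is_cvg_series_exp_coeff.
near=> k.
rewrite /series /= -(big_mkord xpredT (fun N => x ^+ N / (N`!)%:R)).
have hk : (K <= k)%N by near: k; exists K.
rewrite (big_cat_nat (n := K) (leq0n K) hk) /= lerDl.
apply: sumr_ge0 => i _; rewrite /exp_coeff /=.
by apply: divr_ge0; [exact: exprn_ge0 | exact: ler0n].
Unshelve. all: by end_near.
Qed.

Lemma pois_series (R : realType) (m : R) :
  (series (fun N => pois_pmf m N) @ \oo --> (1:R))%classic.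
Proof.
have -> : series (fun N => pois_pmf m N) = (fun k => expR (- m) * series (exp_coeff m) k).
  apply/funext => k; rewrite /series /= mulr_sumr; apply: eq_bigr => i _.
  by rewrite /pois_pmf /exp_coeff /= mulrA.
have -> : (1 : R) = expR (- m) * expR m by rewrite -expRD addNr expR0.
apply: cvgMr.
exact: (is_cvg_series_exp_coeff m).
Qed.


Lemma diag_ge0 (R : realType) (n : nat) (A : 'M[R]_n) : psd A -> forall i, 0 <= A i i.
Proof.
move=> [_ h] i; have := h (delta_mx i 0).
by rewrite trmx_delta -rowE -colE !mxE.
Qed.

Lemma tr_sum (R : realType) (n : nat) (A : 'M[R]_n) : \tr A = \sum_(i < n) A i i.
Proof. by []. Qed.

Lemma card_signs (n : nat) : #|{ffun 'I_n -> bool}| = (2 ^ n)%N.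
Proof. by rewrite card_ffun card_bool card_ord. Qed.

Lemma sum_const_signs (R : realType) (n : nat) (c : R) :
  \sum_(sg : {ffun 'I_n -> bool}) c = c * (2 ^ n)%:R.
Proof. by rewrite sumr_const card_signs mulr_natr. Qed.


Lemma sigma_bound (R : realType) (n : nat) (p : 'I_n -> R) (m lam L : R)
  (sg : {ffun 'I_n -> bool}) :
  (forall i, 0 <= p i) -> \sum_(i < n) p i = 1 -> 0 < m -> 0 <= lam -> lam <= 1/32 ->
  L <= m * lam ^+ 2 * (15/32) ->
  (expR (- (lam * m * lam)) * \prod_(i < n) expR (- (mu lam sg i * (m * p i)))) *
  (expR (- m) * expR (m * \sum_(i < n) p i * expR (mu lam sg i))) <= expR (- L).
Proof.
move=> p0 ps m0 l0 l1 hL.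
rewrite -expR_sum -!expRD ler_expR.
have key : forall i, - (mu lam sg i * (m * p i)) - m * p i + m * (p i * expR (mu lam sg i))
   <= m * p i * (17/32 * lam ^+ 2).
  move=> i.
  have hmu : `|mu lam sg i| <= 1/32 by rewrite /mu; case: (sg i); rewrite ?normrN ger0_norm.
  have hq := exp_quad _ _ hmu.
  have hm2 : mu lam sg i ^+ 2 = lam ^+ 2 by rewrite /mu; case: (sg i); rewrite ?sqrrN.
  rewrite hm2 in hq.
  have mp0 : 0 <= m * p i by apply: mulr_ge0; [exact: ltW|].
  have := ler_wpM2l mp0 hq.
  lra.
have hs : \sum_(i < n) (- (mu lam sg i * (m * p i)) - m * p i + m * (p i * expR (mu lam sg i)))
   <= \sum_(i < n) m * p i * (17/32 * lam ^+ 2) by apply: ler_sum => i _; exact: key.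
have e1 : \sum_(i < n) m * p i * (17/32 * lam ^+ 2) = m * (17/32 * lam ^+ 2).
  by rewrite -mulr_suml -mulr_sumr ps mulr1.
have e2 : \sum_(i < n) (- (mu lam sg i * (m * p i)) - m * p i + m * (p i * expR (mu lam sg i)))
   = \sum_i - (mu lam sg i * (m * p i)) + (- m + m * \sum_(i < n) p i * expR (mu lam sg i)).
  rewrite !big_split /= !sumrN.
  have -> : \sum_(i < n) m * p i = m by rewrite -mulr_sumr ps mulr1.
  rewrite mulr_sumr; ring.
rewrite e1 e2 in hs.
have : lam * m * lam = m * lam ^+ 2 by rewrite expr2; ring.
lra.
Qed.


Lemma pois_ge0 (R : realType) (m : R) N : 0 <= m -> 0 <= pois_pmf m N.
Proof.
move=> m0; rewrite /pois_pmf; apply: divr_ge0; last exact: ler0n.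
apply: mulr_ge0; [exact: expR_ge0 | exact: exprn_ge0].
Qed.

Lemma pois_eseries (R : realType) (m : R) :
  (\sum_(0 <= N <oo) (pois_pmf m N)%:E)%E = 1%:E.
Proof.
apply: cvg_lim => //.
apply: cvg_EFin; first by apply: nearW => k; rewrite sumEFin.
have -> : (fine \o (fun k => \sum_(0 <= N < k) (pois_pmf m N)%:E)%E) = series (fun N => pois_pmf m N).
  by apply/funext => k; rewrite /= sumEFin.
exact: pois_series.
Qed.

Theorem lemma9 (R : realType) (n : nat) (eps delta : R) (rho rhot : 'M[R]_n) :
  0 < eps -> eps <= 1 / 4 -> 0 < delta -> delta < 1 ->
  density_matrix rho -> density_matrix rhot ->
  \sum_(i < n) `| rhot i i - rho i i | <= eps / 8 ->
  let m := 137 * eps ^- 2 * (n%:R * ln 2 + ln (1 / delta)) in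
  ((1 - delta)%:E <= success_prob rho rhot m eps)%E.
Proof.
intros e0 e4 d0 d1 _ [hpsd htr] hclose.
rewrite /is_true; cbv zeta.
set m := (137 * _ * _).
have p0 := diag_ge0 _ _ _ hpsd.
have ps : \sum_(i < n) rhot i i = 1 by rewrite -tr_sum.
set L := n%:R * ln 2 + ln (1 / delta).
have ln2 : 0 < ln (2 : R) by apply: ln_gt0; lra.
have lnd : 0 < ln (1 / delta) by apply: ln_gt0; rewrite ltr_pdivlMr //; lra.
have L0 : 0 < L by rewrite /L; have := ler0n R n; nra.
have m0 : 0 < m by rewrite /m; apply: mulr_gt0 => //; apply: mulr_gt0 => //; 
  rewrite invr_gt0 exprn_gt0.
have mlam : m * (eps / 8) ^+ 2 = 137 / 64 * L.
  by rewrite /m /L; field; rewrite gt_eqF.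
have eL : expR (- L) * (2 ^ n)%:R = delta.
  rewrite expRN /L expRD expRM_natl lnK ?posrE // lnK ?posrE ?divr_gt0 //.
  rewrite natrX; field; apply/andP; split; first by rewrite gt_eqF // exprn_gt0.
  by rewrite gt_eqF.
set lam := eps / 8.
have hLm : L <= m * lam ^+ 2 * (15/32) by rewrite mlam; lra.
have l0 : 0 <= lam by rewrite /lam; lra.
have l1 : lam <= 1 / 32 by rewrite /lam; lra.
set A := fun sg : {ffun 'I_n -> bool} => \sum_(i < n) rhot i i * expR (mu lam sg i).
set C := fun sg : {ffun 'I_n -> bool} => expR (- (lam * m * (eps / 8))) *
      \prod_(i < n) expR (- (mu lam sg i * (m * rhot i i))).
have A0 : forall sg, 0 <= A sg.
  by move=> sg; apply: sumr_ge0 => i _; apply: mulr_ge0 => //; exact: expR_ge0.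
have C0 : forall sg, 0 <= C sg.
  by move=> sg; apply: mulr_ge0; [exact: expR_ge0 | apply: prodr_ge0 => i _; exact: expR_ge0].
set B := fun N => \sum_(s : {ffun 'I_N -> 'I_n} | ~~ good_estimate rho m eps s) seq_prob rhot s.
set G := fun N => \sum_(s : {ffun 'I_N -> 'I_n} | good_estimate rho m eps s) seq_prob rhot s.
have GB : forall N, G N + B N = 1.
  move=> N.
  have e : \sum_(s : {ffun 'I_N -> 'I_n}) seq_prob rhot s = 1.
    by rewrite /seq_prob (@multinom _ N _ (fun i => rhot i i)) ps expr1n.
  by rewrite -e (bigID (fun s => good_estimate rho m eps s)) /=.
have B0 : forall N, 0 <= B N.
  by move=> N; apply: sumr_ge0 => s _; apply: prodr_ge0.
have G0 : forall N, 0 <= G N.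
  by move=> N; apply: sumr_ge0 => s _; apply: prodr_ge0.
have hBN : forall N, B N <= \sum_(sg : {ffun 'I_n -> bool}) C sg * A sg ^+ N.
  move=> N; exact: (bad_sum _ _ _ _ _ _ _ _ p0 m0 l0 hclose).
have hK : forall K, \sum_(N < K) pois_pmf m N * B N <= delta.
  move=> K.
  apply: (le_trans (y := \sum_(N < K) pois_pmf m N *
       \sum_(sg : {ffun 'I_n -> bool}) C sg * A sg ^+ N)).
    apply: ler_sum => N _; apply: ler_wpM2l => //; exact: pois_ge0 (ltW m0).
  under eq_bigr do rewrite mulr_sumr.
  rewrite exchange_big /= -eL -sum_const_signs.
  apply: ler_sum => sg _.
  have -> : \sum_(N < K) pois_pmf m N * (C sg * A sg ^+ N) =
      C sg * (expR (- m) * \sum_(N < K) (m * A sg) ^+ N / (N`!)%:R).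
    rewrite mulr_sumr mulr_sumr; apply: eq_bigr => N _.
    rewrite /pois_pmf [(m * A sg) ^+ N]exprMn; ring.
  apply: (le_trans (y := C sg * (expR (- m) * expR (m * A sg)))).
    apply: ler_wpM2l => //; apply: ler_wpM2l; first exact: expR_ge0.
    apply: exp_partial; apply: mulr_ge0 => //; exact: ltW.
  exact (sigma_bound _ _ _ _ _ _ sg p0 ps m0 l0 l1 hLm).
have pm0 : forall N, 0 <= pois_pmf m N := fun N => pois_ge0 _ _ N (ltW m0).
have hsp : success_prob rho rhot m eps = (\sum_(0 <= N <oo) (pois_pmf m N * G N)%:E)%E by [].
have hsum : (\sum_(0 <= N <oo) ((pois_pmf m N * G N)%:E + (pois_pmf m N * B N)%:E))%E = 1%:E.
  rewrite -(pois_eseries _ m); apply/congr_lim/funext => k; apply: eq_bigr => N _.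
  by rewrite -EFinD -mulrDr GB mulr1.
rewrite nneseriesD in hsum; last 2 first.
- by move=> N _ _; rewrite lee_fin; apply: mulr_ge0.
- by move=> N _ _; rewrite lee_fin; apply: mulr_ge0.
have hb : (\sum_(0 <= N <oo) (pois_pmf m N * B N)%:E <= delta%:E)%E.
  apply: lime_le.
    by apply: is_cvg_nneseries => N _ _; rewrite lee_fin; apply: mulr_ge0.
  by apply: nearW => k; rewrite sumEFin lee_fin big_mkord; exact: hK.
have hb0 : (0 <= \sum_(0 <= N <oo) (pois_pmf m N * B N)%:E)%E.
  by apply: nneseries_ge0 => N _ _; rewrite lee_fin; apply: mulr_ge0.
rewrite hsp.
move: hsum hb hb0.
set Sa := (\sum_(0 <= N <oo) (pois_pmf m N * G N)%:E)%E.
set Sb := (\sum_(0 <= N <oo) (pois_pmf m N * B N)%:E)%E.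
case: Sa => [a| |]; case: Sb => [b| |] //=.
- move=> /eqP; rewrite eqe => /eqP h hb hb0; rewrite lee_fin in hb; rewrite lee_fin; lra.
Qed.
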